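(* Let $P,Q\in\Gamma_n$ and $0<r\le R$ with $r\le p_i/q_i\le R$ for all $i$. Let $s,t\in\mathbb{R}$ with $0\le s\le4$. If $t\ge s$ and $t(4-s)\ge6s-s^2-4$, then $$\Big(\frac{r+1}{2r}\Big)^{s-t-1}\frac{(4-s)r+s}{r}\,\Omega_t(P\|Q)\le\zeta_s(Q\|P)\le\Big(\frac{R+1}{2R}\Big)^{s-t-1}\frac{(4-s)R+s}{R}\,\Omega_t(P\|Q).$$ If $t\le s$ and $t(4-s)\le6s-s^2-4$, then $$\Big(\frac{R+1}{2R}\Big)^{s-t-1}\frac{(4-s)R+s}{R}\,\Omega_t(P\|Q)\le\zeta_s(Q\|P)\le\Big(\frac{r+1}{2r}\Big)^{s-t-1}\frac{(4-s)r+s}{r}\,\Omega_t(P\|Q).$$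
   Context: $\Gamma_n=\{P=(p_1,\dots,p_n): p_i>0,\ \sum_i p_i=1\}$, $n\ge2$. For $P,Q\in\Gamma_n$ and $s\in\mathbb{R}$: $\Omega_s(P\|Q)=[s(s-1)]^{-1}\big[\sum_i p_i\big(\frac{p_i+q_i}{2p_i}\big)^s-1\big]$ for $s\ne0,1$; $\Omega_0(P\|Q)=\sum_i p_i\ln\frac{2p_i}{p_i+q_i}$; $\Omega_1(P\|Q)=\sum_i\frac{p_i+q_i}{2}\ln\frac{p_i+q_i}{2p_i}$. $\zeta_s(Q\|P)=(s-1)^{-1}\sum_i(q_i-p_i)\big(\frac{p_i+q_i}{2p_i}\big)^{s-1}$ for $s\ne1$; $\zeta_1(Q\|P)=\sum_i(q_i-p_i)\ln\frac{p_i+q_i}{2p_i}$. *)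

(* Defs.v *)
(* concrete reals R. Probability vectors of length n are
   functions p : nat -> R, used on indices 0..n-1. *)
From Stdlib Require Import Reals.
Open Scope R_scope.

Definition sumn (n : nat) (f : nat -> R) : R :=
  match n with O => 0 | S m => sum_f_R0 f m end.

Definition in_Gamma (n : nat) (p : nat -> R) : Prop :=
  (forall i, (i < n)%nat -> 0 < p i) /\ sumn n p = 1.

Definition Omega (n : nat) (s : R) (p q : nat -> R) : R :=
  if Req_EM_T s 0 then
    sumn n (fun i => p i * ln (2 * p i / (p i + q i)))
  else if Req_EM_T s 1 then
    sumn n (fun i => (p i + q i) / 2 * ln ((p i + q i) / (2 * p i)))
  else
    / (s * (s - 1)) *
    (sumn n (fun i => p i * Rpower ((p i + q i) / (2 * p i)) s) - 1).

Definition zeta (n : nat) (s : R) (q p : nat -> R) : R :=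
  if Req_EM_T s 1 then
    sumn n (fun i => (q i - p i) * ln ((p i + q i) / (2 * p i)))
  else
    / (s - 1) *
    sumn n (fun i => (q i - p i) * Rpower ((p i + q i) / (2 * p i)) (s - 1)).

(* Main.v *)
Require Import Defs.
From Stdlib Require Import Reals Lra Lia.
From Coquelicot Require Import Coquelicot.
Open Scope R_scope.

Lemma mono (f f' : R -> R) a b : a <= b ->
  (forall c, a <= c <= b -> is_derive f c (f' c)) ->
  (forall c, a <= c <= b -> 0 <= f' c) -> f a <= f b.
Proof.
intros Hab Hd Hp. destruct (Req_dec a b) as [->|Hne]; [lra|].
destruct (MVT_cor2 f f' a b) as [c [Hc1 Hc2]]; [lra| |].
- intros c Hc; apply is_derive_Reals, Hd; auto.
- assert (0 <= f' c) by (apply Hp; lra). nra.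
Qed.

Lemma tangent (H H1 H2 : R -> R) r RR x : 0 < r -> r <= 1 <= RR -> r <= x <= RR ->
  (forall y, 0 < y -> is_derive H y (H1 y)) ->
  (forall y, 0 < y -> is_derive H1 y (H2 y)) ->
  (forall y, r <= y <= RR -> 0 <= H2 y) -> H 1 + H1 1 * (x - 1) <= H x.
Proof.
intros Hr H1R Hx Hd Hd1 Hp.
assert (Hm : forall a b, r <= a -> a <= b -> b <= RR -> H1 a <= H1 b).
{ intros a b Ha Hab Hb. apply (mono H1 H2); auto; intros; [apply Hd1; lra| apply Hp; lra]. }
destruct (Rle_dec 1 x).
- assert (K := mono (fun y => H y - H1 1 * y) (fun y => H1 y - H1 1 * 1) 1 x r0).
  cbv beta in K. assert (H 1 - H1 1 * 1 <= H x - H1 1 * x); [|nra].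
  apply K.
  + intros c Hc. apply is_derive_Reals.
    apply (derivable_pt_lim_minus H (fun y => H1 1 * y)).
    * apply is_derive_Reals, Hd; lra.
    * apply (derivable_pt_lim_scal id (H1 1) c 1), derivable_pt_lim_id.
  + intros c Hc. assert (H1 1 <= H1 c) by (apply Hm; lra). lra.
- assert (K := mono (fun y => H1 1 * y - H y) (fun y => H1 1 * 1 - H1 y) x 1 ltac:(lra)).
  cbv beta in K. assert (H1 1 * x - H x <= H1 1 * 1 - H 1); [|nra].
  apply K.
  + intros c Hc. apply is_derive_Reals.
    apply (derivable_pt_lim_minus (fun y => H1 1 * y) H).
    * apply (derivable_pt_lim_scal id (H1 1) c 1), derivable_pt_lim_id.
    * apply is_derive_Reals, Hd; lra.
  + intros c Hc. assert (H1 c <= H1 1) by (apply Hm; lra). lra.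
Qed.

Lemma r_le_1 N (p q : nat -> R) r RR :
  (forall i, (i <= N)%nat -> 0 < q i) ->
  sum_f_R0 p N = 1 -> sum_f_R0 q N = 1 ->
  (forall i, (i <= N)%nat -> r <= p i / q i <= RR) -> r <= 1 <= RR.
Proof.
intros Hq Hp1 Hq1 Hx. split.
- replace r with (r * sum_f_R0 q N) by (rewrite Hq1; ring).
  rewrite <- Hp1, scal_sum. apply sum_Rle. intros i Hi.
  specialize (Hx i Hi); specialize (Hq i Hi).
  replace (p i) with (p i / q i * q i) by (field; lra). nra.
- replace RR with (RR * sum_f_R0 q N) by (rewrite Hq1; ring).
  rewrite <- Hp1, scal_sum. apply sum_Rle. intros i Hi.
  specialize (Hx i Hi); specialize (Hq i Hi).
  replace (p i) with (p i / q i * q i) by (field; lra). nra.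
Qed.

Lemma sum_tangent N (p q : nat -> R) (H H1 H2 : R -> R) r RR :
  (forall i, (i <= N)%nat -> 0 < q i) ->
  sum_f_R0 p N = 1 -> sum_f_R0 q N = 1 -> 0 < r ->
  (forall i, (i <= N)%nat -> r <= p i / q i <= RR) ->
  H 1 = 0 ->
  (forall y, 0 < y -> is_derive H y (H1 y)) ->
  (forall y, 0 < y -> is_derive H1 y (H2 y)) ->
  (forall y, r <= y <= RR -> 0 <= H2 y) ->
  0 <= sum_f_R0 (fun i => q i * H (p i / q i)) N.
Proof.
intros Hq Hp1 Hq1 Hr Hx H0 Hd Hd1 Hp.
assert (Hb := r_le_1 N p q r RR Hq Hp1 Hq1 Hx).
apply Rle_trans with (sum_f_R0 (fun i => (p i - q i) * H1 1) N).
- rewrite <- scal_sum, minus_sum, Hp1, Hq1. lra.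
- apply sum_Rle. intros i Hi.
  assert (K := tangent H H1 H2 r RR (p i / q i) Hr Hb (Hx i Hi) Hd Hd1 Hp).
  specialize (Hq i Hi). rewrite H0 in K.
  replace ((p i - q i) * H1 1) with (q i * (H1 1 * (p i / q i - 1))) by (field; lra).
  apply Rmult_le_compat_l; lra.
Qed.

Definition E (a x : R) := Rpower ((x+1)/(2*x)) a.

Definition Ff (t x : R) : R :=
  if Req_EM_T t 0 then x * ln (2 * x / (x + 1))
  else if Req_EM_T t 1 then (x + 1) / 2 * ln ((x + 1) / (2 * x))
  else / (t * (t - 1)) * (x * Rpower ((x + 1) / (2 * x)) t - x).

Definition Gf (s x : R) : R :=
  if Req_EM_T s 1 then (1 - x) * ln ((x + 1) / (2 * x))
  else / (s - 1) * ((1 - x) * Rpower ((x + 1) / (2 * x)) (s - 1)).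

Ltac nz := repeat (apply Rmult_integral_contrapositive_currified); try lra; try (apply pow_nonzero; lra).
Ltac dside := repeat split; try lra; try nz;
  try (apply Rmult_lt_0_compat; [lra| apply Rinv_0_lt_compat; lra]).
Ltac dfin := unfold Rdiv; repeat (set (e := exp _); clearbody e); field; repeat split; try lra; repeat (apply Rmult_integral_contrapositive_currified); try lra; try (apply pow_nonzero; lra).

Lemma F_derivs t : exists F1 : R -> R,
  (forall x, 0 < x -> is_derive (Ff t) x (F1 x)) /\
  (forall x, 0 < x -> is_derive F1 x (E t x / (x * (x + 1) ^ 2))).
Proof.
unfold Ff, E, Rpower. destruct (Req_EM_T t 0) as [->|H0].
- exists (fun x => ln (2 * x / (x + 1)) + 1 / (x + 1)). split; intros x Hx.
  + auto_derive; [dside| dfin].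
  + rewrite Rmult_0_l, exp_0. auto_derive; [dside| dfin].
- destruct (Req_EM_T t 1) as [->|H1].
  + exists (fun x => ln ((x + 1) / (2 * x)) / 2 - 1 / (2 * x)). split; intros x Hx.
    * auto_derive; [dside| dfin].
    * rewrite Rmult_1_l, exp_ln by (apply Rdiv_lt_0_compat; lra).
      auto_derive; [dside| dfin].
  + assert (t - 1 <> 0) by lra.
    exists (fun x => /(t*(t-1)) * (exp (t * ln ((x + 1) / (2 * x))) - t * exp (t * ln ((x + 1) / (2 * x))) /(x+1) - 1)).
    split; intros x Hx.
    * auto_derive; [dside| dfin].
    * auto_derive; [dside| dfin].
Qed.

Lemma G_derivs s : exists G1 : R -> R,
  (forall x, 0 < x -> is_derive (Gf s) x (G1 x)) /\
  (forall x, 0 < x -> is_derive G1 x (E (s - 1) x * ((4 - s) * x + s) / (x ^ 2 * (x + 1) ^ 2))).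
Proof.
unfold Gf, E, Rpower. destruct (Req_EM_T s 1) as [->|H1].
- exists (fun x => - ln ((x + 1) / (2 * x)) - (1 - x) / (x * (x + 1))). split; intros x Hx.
  + auto_derive; [dside| dfin].
  + replace (1 - 1) with 0 by ring. rewrite Rmult_0_l, exp_0. auto_derive; [dside| dfin].
- assert (s - 1 <> 0) by lra.
  exists (fun x => - exp ((s - 1) * ln ((x + 1) / (2 * x))) / (s - 1)
     - (1 - x) * exp ((s - 1) * ln ((x + 1) / (2 * x))) / (x * (x + 1))).
  split; intros x Hx.
  + auto_derive; [dside| dfin].
  + auto_derive; [dside| dfin].
Qed.

Lemma phi_deriv a s x : 0 < x ->
  is_derive (fun x => Rpower ((x+1)/(2*x)) a * (((4-s)*x+s)/x)) x
    (E a x * (- a * ((4 - s) * x + s) - s * (x + 1)) / (x ^ 2 * (x + 1))).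
Proof. intros Hx. unfold E, Rpower. auto_derive; [dside| dfin]. Qed.

Definition phi (s t y : R) := Rpower ((y+1)/(2*y)) (s-t-1) * (((4-s)*y+s)/y).

Lemma Ff1 t : Ff t 1 = 0.
Proof.
unfold Ff. destruct (Req_EM_T t 0); [|destruct (Req_EM_T t 1)].
- replace (2 * 1 / (1 + 1)) with 1 by field. rewrite ln_1; ring.
- replace ((1 + 1) / (2 * 1)) with 1 by field. rewrite ln_1; ring.
- replace ((1 + 1) / (2 * 1)) with 1 by field. unfold Rpower. rewrite ln_1, Rmult_0_r, exp_0. ring.
Qed.

Lemma Gf1 s : Gf s 1 = 0.
Proof. unfold Gf. destruct (Req_EM_T s 1); ring. Qed.

Lemma Omega_rep N (p q : nat -> R) t :
  (forall i, (i <= N)%nat -> 0 < p i /\ 0 < q i) -> sum_f_R0 p N = 1 ->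
  Omega (S N) t p q = sum_f_R0 (fun i => q i * Ff t (p i / q i)) N.
Proof.
intros Hpq Hp1. unfold Omega, Ff, sumn.
destruct (Req_EM_T t 0); [|destruct (Req_EM_T t 1)].
- apply sum_eq; intros i Hi. destruct (Hpq i Hi).
  replace (2 * (p i / q i) / (p i / q i + 1)) with (2 * p i / (p i + q i)) by (field; lra).
  field; lra.
- apply sum_eq; intros i Hi. destruct (Hpq i Hi).
  replace ((p i / q i + 1) / (2 * (p i / q i))) with ((p i + q i) / (2 * p i)) by (field; lra).
  field; lra.
- rewrite <- Hp1 at 2. rewrite <- minus_sum, scal_sum.
  apply sum_eq; intros i Hi. destruct (Hpq i Hi).
  replace ((p i / q i + 1) / (2 * (p i / q i))) with ((p i + q i) / (2 * p i)) by (field; lra).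
  field; lra.
Qed.

Lemma zeta_rep N (p q : nat -> R) s :
  (forall i, (i <= N)%nat -> 0 < p i /\ 0 < q i) ->
  zeta (S N) s q p = sum_f_R0 (fun i => q i * Gf s (p i / q i)) N.
Proof.
intros Hpq. unfold zeta, Gf, sumn.
destruct (Req_EM_T s 1).
- apply sum_eq; intros i Hi. destruct (Hpq i Hi).
  replace ((p i / q i + 1) / (2 * (p i / q i))) with ((p i + q i) / (2 * p i)) by (field; lra).
  field; lra.
- rewrite scal_sum.
  apply sum_eq; intros i Hi. destruct (Hpq i Hi).
  replace ((p i / q i + 1) / (2 * (p i / q i))) with ((p i + q i) / (2 * p i)) by (field; lra).
  field; lra.
Qed.

Lemma H2_eq s t m x (F2 G2 : R -> R) : 0 < x ->
  G2 x = E (s - 1) x * ((4 - s) * x + s) / (x ^ 2 * (x + 1) ^ 2) ->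
  F2 x = E t x / (x * (x + 1) ^ 2) ->
  G2 x - m * F2 x = E t x / (x * (x + 1) ^ 2) * (phi s t x - m).
Proof.
intros Hx -> ->. unfold phi, E.
replace (s - 1) with ((s - t - 1) + t) by ring. rewrite Rpower_plus.
field. lra.
Qed.

Lemma E_pos a x : 0 < E a x.
Proof. unfold E, Rpower. apply exp_pos. Qed.

Lemma bounds N (p q : nat -> R) r RR s t m :
  (forall i, (i <= N)%nat -> 0 < p i /\ 0 < q i) ->
  sum_f_R0 p N = 1 -> sum_f_R0 q N = 1 -> 0 < r ->
  (forall i, (i <= N)%nat -> r <= p i / q i <= RR) ->
  ((forall y, r <= y <= RR -> m <= phi s t y) ->
     m * sum_f_R0 (fun i => q i * Ff t (p i / q i)) N
       <= sum_f_R0 (fun i => q i * Gf s (p i / q i)) N) /\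
  ((forall y, r <= y <= RR -> phi s t y <= m) ->
     sum_f_R0 (fun i => q i * Gf s (p i / q i)) N
       <= m * sum_f_R0 (fun i => q i * Ff t (p i / q i)) N).
Proof.
intros Hpq Hp1 Hq1 Hr Hx.
assert (Hq : forall i, (i <= N)%nat -> 0 < q i) by (intros i Hi; apply Hpq; auto).
destruct (F_derivs t) as [F1 [HF HF1]].
destruct (G_derivs s) as [G1 [HG HG1]].
split; intros Hm.
- assert (K := sum_tangent N p q (fun x => Gf s x - m * Ff t x) (fun x => G1 x - m * F1 x)
    (fun x => E (s - 1) x * ((4 - s) * x + s) / (x ^ 2 * (x + 1) ^ 2) - m * (E t x / (x * (x + 1) ^ 2)))
    r RR Hq Hp1 Hq1 Hr Hx).
  cbv beta in K.
  assert (0 <= sum_f_R0 (fun i => q i * (Gf s (p i / q i) - m * Ff t (p i / q i))) N).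
  { apply K.
    - rewrite Gf1, Ff1; ring.
    - intros y Hy. apply is_derive_Reals.
      apply (derivable_pt_lim_minus (Gf s) (mult_real_fct m (Ff t))).
      + apply is_derive_Reals; auto.
      + apply derivable_pt_lim_scal, is_derive_Reals; auto.
    - intros y Hy. apply is_derive_Reals.
      apply (derivable_pt_lim_minus G1 (mult_real_fct m F1)).
      + apply is_derive_Reals; auto.
      + apply derivable_pt_lim_scal, is_derive_Reals; auto.
    - intros y Hy.
      rewrite (H2_eq s t m y (fun x => E t x / (x * (x + 1) ^ 2)) (fun x => E (s - 1) x * ((4 - s) * x + s) / (x ^ 2 * (x + 1) ^ 2))) by (auto; lra).
      apply Rmult_le_pos.
      + apply Rlt_le, Rdiv_lt_0_compat. apply E_pos. apply Rmult_lt_0_compat; [lra|]. apply pow_lt; lra.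
      + specialize (Hm y Hy). lra. }
  assert (sum_f_R0 (fun i => q i * (Gf s (p i / q i) - m * Ff t (p i / q i))) N =
    sum_f_R0 (fun i => q i * Gf s (p i / q i)) N - m * sum_f_R0 (fun i => q i * Ff t (p i / q i)) N)
    by (rewrite scal_sum, <- minus_sum; apply sum_eq; intros; ring).
  lra.
- assert (K := sum_tangent N p q (fun x => m * Ff t x - Gf s x) (fun x => m * F1 x - G1 x)
    (fun x => m * (E t x / (x * (x + 1) ^ 2)) - E (s - 1) x * ((4 - s) * x + s) / (x ^ 2 * (x + 1) ^ 2))
    r RR Hq Hp1 Hq1 Hr Hx).
  cbv beta in K.
  assert (0 <= sum_f_R0 (fun i => q i * (m * Ff t (p i / q i) - Gf s (p i / q i))) N).
  { apply K.
    - rewrite Gf1, Ff1; ring.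
    - intros y Hy. apply is_derive_Reals.
      apply (derivable_pt_lim_minus (mult_real_fct m (Ff t)) (Gf s)).
      + apply derivable_pt_lim_scal, is_derive_Reals; auto.
      + apply is_derive_Reals; auto.
    - intros y Hy. apply is_derive_Reals.
      apply (derivable_pt_lim_minus (mult_real_fct m F1) G1).
      + apply derivable_pt_lim_scal, is_derive_Reals; auto.
      + apply is_derive_Reals; auto.
    - intros y Hy.
      assert (HH := H2_eq s t m y (fun x => E t x / (x * (x + 1) ^ 2)) (fun x => E (s - 1) x * ((4 - s) * x + s) / (x ^ 2 * (x + 1) ^ 2)) ltac:(lra) eq_refl eq_refl).
      cbv beta in HH.
      assert (0 <= E t y / (y * (y + 1) ^ 2) * (m - phi s t y)); [|nra].
      apply Rmult_le_pos.
      + apply Rlt_le, Rdiv_lt_0_compat. apply E_pos. apply Rmult_lt_0_compat; [lra|]. apply pow_lt; lra.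
      + specialize (Hm y Hy). lra. }
  assert (sum_f_R0 (fun i => q i * (m * Ff t (p i / q i) - Gf s (p i / q i))) N =
    m * sum_f_R0 (fun i => q i * Ff t (p i / q i)) N - sum_f_R0 (fun i => q i * Gf s (p i / q i)) N)
    by (rewrite scal_sum, <- minus_sum; apply sum_eq; intros; ring).
  lra.
Qed.

Lemma phi_num_eq s t x :
  - (s - t - 1) * ((4 - s) * x + s) - s * (x + 1) =
  x * (t * (4 - s) - (6 * s - s ^ 2 - 4)) + s * (t - s).
Proof. ring. Qed.

Lemma phi_mono_up s t a b : 0 <= s <= 4 -> t >= s -> t * (4 - s) >= 6 * s - s ^ 2 - 4 ->
  0 < a -> a <= b -> phi s t a <= phi s t b.
Proof.
intros Hs Ht Hc Ha Hab.
apply (mono (phi s t) (fun x => E (s - t - 1) x * (- (s - t - 1) * ((4 - s) * x + s) - s * (x + 1)) / (x ^ 2 * (x + 1)))); auto.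
- intros c Hc'. apply phi_deriv; lra.
- intros c Hc'. rewrite phi_num_eq. unfold Rdiv. apply Rmult_le_pos.
  + apply Rmult_le_pos; [apply Rlt_le, E_pos|].
    apply Rplus_le_le_0_compat; apply Rmult_le_pos; lra.
  + apply Rlt_le, Rinv_0_lt_compat, Rmult_lt_0_compat; [apply pow_lt|]; lra.
Qed.

Lemma phi_mono_down s t a b : 0 <= s <= 4 -> t <= s -> t * (4 - s) <= 6 * s - s ^ 2 - 4 ->
  0 < a -> a <= b -> phi s t b <= phi s t a.
Proof.
intros Hs Ht Hc Ha Hab.
assert (K := mono (fun x => - phi s t x) (fun x => - (E (s - t - 1) x * (- (s - t - 1) * ((4 - s) * x + s) - s * (x + 1)) / (x ^ 2 * (x + 1)))) a b Hab).
cbv beta in K. cut (- phi s t a <= - phi s t b); [lra|]. apply K.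
- intros c Hc'. apply is_derive_Reals, (derivable_pt_lim_opp (phi s t)), is_derive_Reals, phi_deriv; lra.
- intros c Hc'. rewrite phi_num_eq. unfold Rdiv.
  cut (0 <= E (s - t - 1) c * - (c * (t * (4 - s) - (6 * s - s ^ 2 - 4)) + s * (t - s)) *
     / (c ^ 2 * (c + 1))); [lra|].
  apply Rmult_le_pos.
  + apply Rmult_le_pos; [apply Rlt_le, E_pos|].
    assert (0 <= c * (6 * s - s ^ 2 - 4 - t * (4 - s))) by (apply Rmult_le_pos; lra).
    assert (0 <= s * (s - t)) by (apply Rmult_le_pos; lra). lra.
  + apply Rlt_le, Rinv_0_lt_compat, Rmult_lt_0_compat; [apply pow_lt|]; lra.
Qed.

Theorem theorem4p1 (n : nat) (p q : nat -> R) (r RR s t : R) :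
  (2 <= n)%nat ->
  in_Gamma n p -> in_Gamma n q ->
  0 < r -> r <= RR ->
  (forall i, (i < n)%nat -> r <= p i / q i <= RR) ->
  0 <= s <= 4 ->
  ((t >= s -> t * (4 - s) >= 6 * s - s ^ 2 - 4 ->
     Rpower ((r + 1) / (2 * r)) (s - t - 1) * (((4 - s) * r + s) / r) * Omega n t p q
       <= zeta n s q p
     /\ zeta n s q p
       <= Rpower ((RR + 1) / (2 * RR)) (s - t - 1) * (((4 - s) * RR + s) / RR) * Omega n t p q)
  /\
   (t <= s -> t * (4 - s) <= 6 * s - s ^ 2 - 4 ->
     Rpower ((RR + 1) / (2 * RR)) (s - t - 1) * (((4 - s) * RR + s) / RR) * Omega n t p q
       <= zeta n s q p
     /\ zeta n s q p
       <= Rpower ((r + 1) / (2 * r)) (s - t - 1) * (((4 - s) * r + s) / r) * Omega n t p q)).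
Proof.
intros Hn [Hp Hp1] [Hq Hq1] Hr HrR Hx Hs.
destruct n as [|N]; [lia|]. unfold sumn in Hp1, Hq1.
assert (Hpq : forall i, (i <= N)%nat -> 0 < p i /\ 0 < q i) by (intros i Hi; split; [apply Hp|apply Hq]; lia).
assert (Hx' : forall i, (i <= N)%nat -> r <= p i / q i <= RR) by (intros i Hi; apply Hx; lia).
rewrite (Omega_rep N p q t Hpq Hp1), (zeta_rep N p q s Hpq).
change (Rpower ((r + 1) / (2 * r)) (s - t - 1) * (((4 - s) * r + s) / r)) with (phi s t r).
change (Rpower ((RR + 1) / (2 * RR)) (s - t - 1) * (((4 - s) * RR + s) / RR)) with (phi s t RR).
split; intros Ht Hc; split.
- apply (bounds N p q r RR s t (phi s t r) Hpq Hp1 Hq1 Hr Hx').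
  intros y Hy. apply phi_mono_up; lra.
- apply (bounds N p q r RR s t (phi s t RR) Hpq Hp1 Hq1 Hr Hx').
  intros y Hy. apply phi_mono_up; lra.
- apply (bounds N p q r RR s t (phi s t RR) Hpq Hp1 Hq1 Hr Hx').
  intros y Hy. apply phi_mono_down; lra.
- apply (bounds N p q r RR s t (phi s t r) Hpq Hp1 Hq1 Hr Hx').
  intros y Hy. apply phi_mono_down; lra.
Qed.
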